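(* Every instance of Crossing Cost Multi-Agent Routing (CC-MAR) admits a (pure) Nash equilibrium. Moreover, any Nash dynamics (sequence of improving moves) starting from any strategy profile reaches a Nash equilibrium after at most $w_{\max}k^2|E|$ steps, where $w_{\max}$ is the maximum edge weight, $k$ the number of agents, and $|E|$ the number of undirected edges.
   Context: A mixed graph $G=(V,E,A)$ has a set $E\subseteq\binom{V}{2}$ of undirected edges and a set $A\subseteq V\times V$ of arcs; each edge $e\in E$ has a positive integer weight $w_e$. A path is a sequence of pairwise distinct vertices $v_1,\dots,v_m$ such that for each $i<m$ either $\{v_i,v_{i+1}\}\in E$ or $(v_i,v_{i+1})\in A$; it traverses an edge $\{v_i,v_{i+1}\}\in E$ in the direction from $v_i$ to $v_{i+1}$. A CC-MAR instance is $\Gamma=(G,\mathcal{T})$ where $\mathcal{T}$ is a multiset of $k$ pairs $(s_i,t_i)\in V\times V$ (agents $i\in[k]$); it is assumed that for each $i$ an $s_i$-$t_i$ path exists. A strategy profile is $\mathcal{P}=\{P_1,\dots,P_k\}$ with $P_i$ an $s_i$-$t_i$ path. For an edge $\{u,v\}\in E$ let $x_{uv}$ be the number of paths of $\mathcal{P}$ traversing it from $u$ to $v$. The individual cost of agent $i$ is $\mathrm{cost}_{\mathcal{P}}(P_i)=\sum w_{uv}x_{vu}$, summed over the edges $\{u,v\}\in E$ that $P_i$ traverses from $u$ to $v$ (i.e., the weighted number of other paths using that edge in the opposite direction). The total cost is $\mathrm{cost}(\mathcal{P})=\sum_{\{u,v\}\in E}w_{uv}x_{uv}x_{vu}$. A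 Nash equilibrium is a profile in which no agent can strictly decrease its individual cost by replacing its own path by another $s_i$-$t_i$ path while the others stay fixed. A Nash dynamics step replaces the path of some agent by one giving it strictly smaller individual cost. *)

(* Defs.v *)
From mathcomp Require Import all_boot all_order.
Set Implicit Arguments. Unset Strict Implicit. Unset Printing Implicit Defensive.

Section CCMAR.
Variable V : finType.
(* undirected edges: 2-element subsets of V *)
Variable E : {set {set V}}.
Variable A : rel V.
(* edge weights (only values on E matter) *)
Variable w : {set V} -> nat.

Definition step (u v : V) : bool := ([set u; v] \in E) || A u v.

Definition is_path (s t : V) (p : seq V) : bool :=
  if p is x :: q then [&& x == s, last x q == t, path step x q & uniq p]
  else false.

Definition traverses (p : seq V) (u v : V) : bool :=
  ([set u; v] \in E) && ((u, v) \in zip p (behead p)).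

Definition profile (k : nat) := 'I_k -> seq V.

Definition xcount k (P : profile k) (u v : V) : nat :=
  \sum_(i < k) (traverses (P i) u v : nat).

Definition cost k (P : profile k) (i : 'I_k) : nat :=
  \sum_(e <- zip (P i) (behead (P i)) | [set e.1; e.2] \in E)
     w [set e.1; e.2] * xcount P e.2 e.1.

Definition valid_profile k (T : 'I_k -> V * V) (P : profile k) : Prop :=
  forall i, is_path (T i).1 (T i).2 (P i).

Definition upd k (P : profile k) (i : 'I_k) (p : seq V) : profile k :=
  fun j => if j == i then p else P j.

Definition nash_eq k (T : 'I_k -> V * V) (P : profile k) : Prop :=
  valid_profile T P /\
  forall (i : 'I_k) (p : seq V), is_path (T i).1 (T i).2 p ->
    cost P i <= cost (upd P i p) i.

Definition nash_step k (T : 'I_k -> V * V) (P Q : profile k) : Prop :=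
  exists (i : 'I_k) (p : seq V),
    [/\ is_path (T i).1 (T i).2 p, Q = upd P i p & cost Q i < cost P i].

Definition wmax : nat := \max_(e in E) w e.
End CCMAR.

(* Main.v *)
Require Import Defs.
From mathcomp Require Import all_boot all_order.
From Stdlib Require Import Classical.
From mathcomp Require Import zify.
Set Implicit Arguments. Unset Strict Implicit. Unset Printing Implicit Defensive.

Lemma mem_zip1 (T : eqType) (s t : seq T) a b : (a, b) \in zip s t -> a \in s.
Proof.
elim: s t => [|x s IH] [|y t] //=; rewrite in_cons => /orP [/eqP [-> _]|H].
  by rewrite ?inE ?eqxx.
by rewrite ?inE (IH _ H) orbT.
Qed.

Lemma mem_zip2 (T : eqType) (s t : seq T) a b : (a, b) \in zip s t -> b \in t.
Proof.
elim: s t => [|x s IH] [|y t] //=; rewrite in_cons => /orP [/eqP [_ ->]|H].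
  by rewrite ?inE ?eqxx.
by rewrite ?inE (IH _ H) orbT.
Qed.

Lemma pairs_anti (T : eqType) (p : seq T) u v : uniq p ->
  (u, v) \in zip p (behead p) -> (v, u) \in zip p (behead p) -> False.
Proof.
elim: p => [|x q IH] //; case: q IH => [|y q] IH //=.
move=> /andP [xn uq].
have xyq : x \notin q by move: xn; rewrite in_cons negb_or => /andP [].
have xy : x != y by move: xn; rewrite in_cons negb_or => /andP [].
rewrite !in_cons => /orP [/eqP [-> ->]|H1] /orP [/eqP [Ex Ey]|H2].
- by move: xy; rewrite Ex eqxx.
- by move: xyq; rewrite (mem_zip2 H2).
- by move: H1; rewrite Ex Ey => /mem_zip2; rewrite (negbTE xyq).
- exact: (IH uq H1 H2).
Qed.

Section Pot.
Variables (V : finType) (E : {set {set V}}) (A : rel V) (w : {set V} -> nat) (k : nat).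

Definition tr (p : seq V) (x : V * V) : nat := traverses E p x.1 x.2.
Definition xc (P : profile V k) (x : V * V) := xcount E P x.1 x.2.
Definition sw (x : V * V) : V * V := (x.2, x.1).
Definition wt (x : V * V) := w [set x.1; x.2].
Definition Psi (P : profile V k) := \sum_(x : V * V) wt x * (xc P x * xc P (sw x)).
Definition yc (P : profile V k) i x := \sum_(j < k | j != i) tr (P j) x.
Definition Rr (P : profile V k) i := \sum_(x : V * V) wt x * (yc P i x * yc P i (sw x)).

Lemma swK : involutive sw. Proof. by case. Qed.
Lemma wt_sw x : wt (sw x) = wt x. Proof. by rewrite /wt /= setUC. Qed.

Lemma anti (p : seq V) x : uniq p -> tr p x * tr p (sw x) = 0.
Proof.
move=> up; rewrite /tr /traverses /=.
case H1: ((x.1, x.2) \in zip p (behead p)); last by rewrite !andbF.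
case H2: ((x.2, x.1) \in zip p (behead p)); last by rewrite !andbF muln0.
by case: (pairs_anti up H1 H2).
Qed.

Lemma xc_split (P : profile V k) i x : xc P x = tr (P i) x + yc P i x.
Proof. by rewrite /xc /xcount (bigD1 i). Qed.

Lemma cost_eq (P : profile V k) i : uniq (P i) ->
  cost E w P i = \sum_(x : V * V) tr (P i) x * (wt x * xc P (sw x)).
Proof.
move=> up; rewrite /cost big_mkcond big_uniq; last exact: zip_uniql.
rewrite big_mkcond; apply: eq_bigr => x _ /=.
rewrite /tr /traverses -surjective_pairing.
by case: (x \in _); case: ([set _; _] \in E); rewrite ?mul1n ?mul0n.
Qed.

Lemma Psi_split (P : profile V k) i : uniq (P i) ->
  Psi P = Rr P i + 2 * cost E w P i.
Proof.
move=> up; rewrite cost_eq //.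
pose G x := tr (P i) x * (wt x * yc P i (sw x)).
have -> : Psi P = \sum_(x : V * V) (wt x * (yc P i x * yc P i (sw x)) + (G x + G (sw x))).
  apply: eq_bigr => x _; rewrite /G /= swK wt_sw (xc_split P i x) (xc_split P i (sw x)).
  have := anti x up; set a := tr _ x; set b := tr _ (sw x); set y1 := yc P i x; set y2 := yc P i (sw x).
  move=> ab; rewrite mulnDl !mulnDr ab muln0.
  lia.
have HG : \sum_(x : V * V) G (sw x) = \sum_x G x.
  by rewrite [RHS](reindex_inj (inv_inj swK)).
have -> : \sum_(x : V * V) tr (P i) x * (wt x * xc P (sw x)) = \sum_x G x.
  apply: eq_bigr => x _; rewrite /G (xc_split P i (sw x)) !mulnDr.
  by rewrite (mulnCA (tr _ x) (wt x)) anti // muln0 add0n.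
by rewrite big_split /= big_split /= HG addnn -mul2n.
Qed.

Lemma Rr_upd (P : profile V k) i p : Rr (upd P i p) i = Rr P i.
Proof.
rewrite /Rr; apply: eq_bigr => x _; congr (_ * (_ * _)); apply: eq_bigr => j ji;
  by rewrite /upd (negbTE ji).
Qed.

Lemma step_dec (P : profile V k) i p : uniq (P i) -> uniq p ->
  cost E w (upd P i p) i < cost E w P i -> Psi (upd P i p) + 2 <= Psi P.
Proof.
move=> uP up lt.
rewrite (@Psi_split (upd P i p) i); last by rewrite /upd eqxx.
rewrite (Psi_split uP) Rr_upd; lia.
Qed.

Lemma xc_le (P : profile V k) x : xc P x <= k.
Proof.
apply: (@leq_trans (\sum_(j < k) 1)); last by rewrite sum1_card card_ord.
by apply: leq_sum => j _; case: traverses.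
Qed.

Lemma Psi_bound (P : profile V k) : (forall e, e \in E -> #|e| = 2) ->
  Psi P <= 2 * (wmax E w * k ^ 2 * #|E|).
Proof.
move=> E2; rewrite /Psi (bigID (fun x : V * V => [set x.1; x.2] \in E)) /=.
rewrite [X in _ + X]big1 ?addn0; last first.
  move=> x nx; rewrite /xc /xcount big1 ?mul0n ?muln0 // => j _.
  by rewrite /traverses (negbTE nx).
rewrite (partition_big (fun x : V * V => [set x.1; x.2]) (fun e => e \in E)) //=.
apply: (@leq_trans (\sum_(e in E) (2 * (wmax E w * k ^ 2)))); last first.
  by rewrite sum_nat_const (mulnC #|E|) !mulnA.
apply: leq_sum => e eE.
apply: (@leq_trans (\sum_(x : V * V | ([set x.1; x.2] \in E) && ([set x.1; x.2] == e)) (wmax E w * k ^ 2))).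
  apply: leq_sum => x /andP [xE _]; rewrite -mulnn; apply: leq_mul.
    by rewrite /wt /wmax; apply: leq_bigmax_cond.
  by apply: leq_mul; apply: xc_le.
rewrite sum_nat_cond_const leq_mul2r; apply/orP; right.
have /cards2P [a [b [ab ->]]] : #|e| == 2 by rewrite (E2 _ eE).
apply: (@leq_trans #|[set (a, b); (b, a)]|); last by rewrite cards2 ltnS leq_b1.
apply: subset_leq_card; apply/subsetP => -[x1 x2]; rewrite inE => /andP [_ /eqP H] /=.
have ha : x1 \in [set a; b] by rewrite -H set21.
have hb : x2 \in [set a; b] by rewrite -H set22.
have ha' : a \in [set x1; x2] by rewrite H set21.
have hb' : b \in [set x1; x2] by rewrite H set22.
move: H ha hb ha' hb'; rewrite !inE.
move=> _ /orP[]/eqP-> /orP[]/eqP->; rewrite ?eqxx ?orbT //=;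
  move: ab; rewrite ?(eq_sym b a) => /negbTE ->; by rewrite ?orbF.
Qed.
End Pot.

Theorem mainTheorem1 (V : finType) (E : {set {set V}}) (A : rel V)
    (w : {set V} -> nat) (k : nat) (T : 'I_k -> V * V) :
  (forall e, e \in E -> #|e| = 2) ->
  (forall e, e \in E -> 0 < w e) ->
  (forall i, exists p, is_path E A (T i).1 (T i).2 p) ->
  (exists P : profile V k, nash_eq E A w T P) /\
  (forall (n : nat) (Q : nat -> profile V k),
     valid_profile E A T (Q 0) ->
     (forall j, j < n -> nash_step E A w T (Q j) (Q j.+1)) ->
     n <= wmax E w * k ^ 2 * #|E|).
Proof.
move=> E2 wpos Hex.
have upath : forall s t p, is_path E A s t p -> uniq p.
  by move=> s t [|x q] //= /and4P [].
have vupd : forall (P : profile V k) i p, valid_profile E A T P ->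
    is_path E A (T i).1 (T i).2 p -> valid_profile E A T (upd P i p).
  by move=> P i p vP hp j; rewrite /upd; case: eqP => [->|_].
have key : forall P : profile V k, valid_profile E A T P ->
    (exists P', nash_eq E A w T P') \/
    exists Q, valid_profile E A T Q /\ Psi E w Q + 2 <= Psi E w P.
  move=> P vP.
  case: (classic (exists i p, is_path E A (T i).1 (T i).2 p /\
                   cost E w (upd P i p) i < cost E w P i)) => [[i [p [hp lt]]]|nex].
    right; exists (upd P i p); split; first exact: vupd.
    exact: (step_dec (upath _ _ _ (vP i)) (upath _ _ _ hp) lt).
  left; exists P; split => // i p hp; rewrite leqNgt; apply/negP => lt.
  by apply: nex; exists i, p.
split.
  pose P0 : profile V k := fun i => xchoose (Hex i).
  have v0 : valid_profile E A T P0 := fun i => xchooseP (Hex i).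
  suff : forall m (P : profile V k), valid_profile E A T P -> Psi E w P <= m ->
      exists P, nash_eq E A w T P by move=> /(_ _ P0 v0 (leqnn _)).
  elim=> [|m IH] P vP hP; (case: (key P vP) => [//|[Q [vQ hQ]]]).
    by move: hP hQ; lia.
  by apply: (IH Q vQ); move: hP hQ; lia.
move=> n Q v0 hs.
have inv : forall j, j <= n ->
    valid_profile E A T (Q j) /\ Psi E w (Q j) + 2 * j <= Psi E w (Q 0).
  elim=> [|j IHj] hj; first by split => //; rewrite muln0 addn0.
  have [vj pj] := IHj (ltnW hj).
  have [i [p [hp eq lt]]] := hs j hj.
  rewrite eq in lt *; split; first exact: vupd.
  have := step_dec (upath _ _ _ (vj i)) (upath _ _ _ hp) lt.
  by move: pj; lia.
have [_ h] := inv n (leqnn n).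
have hb := Psi_bound w (Q 0) E2.
move: h hb; set B := wmax E w * k ^ 2 * #|E|; lia.
Qed.
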